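(* Let $a,b,c,n,m,p,q,r$ be integers all strictly greater than $1$, and let $$M=\begin{pmatrix} 1 & a & b\\ c & n & m\\ p & q & r\end{pmatrix}.$$ If $n=ac+1$, $r=bp+1$, $m=bc$ and $q=ap$, then $\mathrm{Cat}(M)\neq\emptyset$.
   Context: For an $n\times n$ matrix $M=(m_{ij})$ with entries in the natural numbers, $\mathrm{Cat}(M)$ denotes the collection of categories $A$ with exactly $n$ distinct objects $x_1,\dots,x_n$ such that $|A(x_i,x_j)|=m_{ij}$ for all $i,j$, where $A(x_i,x_j)$ is the set of morphisms from $x_i$ to $x_j$. *)

(* Defs.v *)
From mathcomp Require Import all_boot all_algebra.
Set Implicit Arguments. Unset Strict Implicit. Unset Printing Implicit Defensive.

(* A (small) category whose objects are exactly the n distinct objects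
   x_0, ..., x_{n-1} (indexed by 'I_n), with finite hom-sets. *)
Record category_on (N : nat) := CategoryOn {
  hom : 'I_N -> 'I_N -> finType;
  idm : forall i : 'I_N, hom i i;
  comp : forall i j k : 'I_N, hom j k -> hom i j -> hom i k;
  comp_id_l : forall (i j : 'I_N) (f : hom i j), comp (idm j) f = f;
  comp_id_r : forall (i j : 'I_N) (f : hom i j), comp f (idm i) = f;
  comp_assoc : forall (i j k l : 'I_N) (h : hom k l) (g : hom j k) (f : hom i j),
      comp h (comp g f) = comp (comp h g) f
}.

Definition in_Cat (N : nat) (M : 'M[nat]_N) (A : category_on N) : Prop :=
  forall i j : 'I_N, #|hom A i j| = M i j.

Definition Cat_nonempty (N : nat) (M : 'M[nat]_N) : Prop :=
  exists A : category_on N, in_Cat M A.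

Definition mx3 (x00 x01 x02 x10 x11 x12 x20 x21 x22 : nat) : 'M[nat]_3 :=
  \matrix_(i < 3, j < 3)
    nth 0 (nth [::] [:: [:: x00; x01; x02]; [:: x10; x11; x12]; [:: x20; x21; x22]] i) j.

(* Main.v *)
Require Import Defs.
From mathcomp Require Import all_boot all_algebra.
From mathcomp Require Import zify.
Set Implicit Arguments. Unset Strict Implicit. Unset Printing Implicit Defensive.
Lemma card_lt K U : U <= K -> #|[pred u : 'I_K | u < U]| = U.
Proof.
move=> hUK.
have inj : injective (widen_ord hUK) by move=> x y /(congr1 val) /= /val_inj.
rewrite -[RHS]card_ord -(card_image inj); apply: eq_card => u.
rewrite inE; apply/idP/imageP => [hu|[v _ ->]] /=; last exact: ltn_ord.
by exists (Ordinal hu) => //; apply/val_inj.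
Qed.
Lemma card_opt (T : finType) (P : pred (option T)) :
  #|[pred x | P x]| = P None + #|[pred y | P (Some y)]|.
Proof.
rewrite (cardD1 None) inE; congr (_ + _).
have inj : injective (@Some T) by move=> x y [].
rewrite -(card_image inj); apply: eq_card => x.
rewrite !inE; apply/idP/imageP => [/andP[hx hP]|[y hy ->]] //.
by case: x hx hP => // y _ hy; exists y.
Qed.
Section S.
Variables (k : nat) (U V : 'I_3 -> nat).
Hypothesis U0 : U ord0 = 1.
Hypothesis V0 : V ord0 = 1.
Local Notation K := k.+1.
Definition T := option ('I_K * 'I_K).
Definition valid (i j : 'I_3) (x : T) : bool :=
  match x with
  | None => (i == j) && (i != ord0)
  | Some (u, v) => (u < U i) && (v < V j)
  end.
Definition hm (i j : 'I_3) : finType := {x : T | valid i j x}.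
Definition rc (g f : T) : T :=
  match f, g with
  | None, _ => g
  | _, None => f
  | Some (u1, _), Some (_, v2) => Some (u1, v2)
  end.
Definition idr (i : 'I_3) : T := if i == ord0 then Some (ord0, ord0) else None.
Lemma idr_valid i : valid i i (idr i).
Proof.
rewrite /idr; case: eqP => [->|/eqP h] /=; last by rewrite eqxx h.
by rewrite U0 V0.
Qed.
Lemma rc_valid i j l g f : valid j l g -> valid i j f -> valid i l (rc g f).
Proof.
case: f => [[u1 v1]|]; case: g => [[u2 v2]|] //=.
- by move=> /andP[_ ->] /andP[-> _].
- by case/andP=> /eqP e _; rewrite -e.
- by move=> hg /andP[/eqP e _]; rewrite e.
- move=> /andP[/eqP e1 _] /andP[/eqP e2 h]; rewrite e2 e1 eqxx /=.
  by rewrite -e1 -e2.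
Qed.
Definition idm' (i : 'I_3) : hm i i := exist _ (idr i) (idr_valid i).
Definition comp' (i j l : 'I_3) (g : hm j l) (f : hm i j) : hm i l :=
  exist _ (rc (val g) (val f)) (rc_valid (valP g) (valP f)).
Lemma cid_l i j (f : hm i j) : comp' (idm' j) f = f.
Proof.
apply/val_inj; case: f => [[[u v]|] /= h]; rewrite /idr.
- case: eqP => [e|] //=; subst j; congr (Some (_, _)); apply/val_inj.
  by move: h => /andP[_]; rewrite V0; case: v => [[|]].
- by case/andP: h => /eqP <- /negbTE ->.
Qed.
Lemma cid_r i j (f : hm i j) : comp' f (idm' i) = f.
Proof.
apply/val_inj; case: f => [[[u v]|] /= h]; rewrite /idr.
- case: eqP => [e|] //=; subst i; congr (Some (_, _)); apply/val_inj.
  by move: h => /andP[]; rewrite U0; case: u => [[|]].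
- by case/andP: h => /eqP -> /negbTE ->.
Qed.
Lemma cassoc i j l o (h : hm l o) (g : hm j l) (f : hm i j) :
  comp' h (comp' g f) = comp' (comp' h g) f.
Proof.
apply/val_inj => /=.
by case: (val f) => [[? ?]|]; case: (val g) => [[? ?]|]; case: (val h) => [[? ?]|].
Qed.
Definition cat : category_on 3 := CategoryOn cid_l cid_r cassoc.
Hypothesis UK : forall i, U i <= K.
Hypothesis VK : forall i, V i <= K.
Lemma card_hm i j : #|Defs.hom cat i j| = ((i == j) && (i != ord0)) + U i * V j.
Proof.
rewrite /= /hm card_sig card_opt /=; congr (_ + _).
transitivity #|[predX [pred u : 'I_K | u < U i] & [pred v : 'I_K | v < V j]]|.
  by apply: eq_card => -[u v]; rewrite !inE.
by rewrite cardX card_lt // card_lt.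
Qed.
End S.

Theorem mainTheorem4 (a b c n m p q r : nat) :
  1 < a -> 1 < b -> 1 < c -> 1 < n -> 1 < m -> 1 < p -> 1 < q -> 1 < r ->
  n = a * c + 1 -> r = b * p + 1 -> m = b * c -> q = a * p ->
  Cat_nonempty (mx3 1 a b c n m p q r).
Proof.
move=> ha hb hc _ _ _ _ _ -> -> -> ->.
pose U (i : 'I_3) := nth 0 [:: 1; c; p] i.
pose V (i : 'I_3) := nth 0 [:: 1; a; b] i.
pose k := a + b + c + p.
have UK : forall i, U i <= k.+1.
  by move=> [[|[|[|]]] ?] //; rewrite /U /k /=; lia.
have VK : forall i, V i <= k.+1.
  by clear UK; move=> [[|[|[|]]] ?] //; rewrite /V /k /=; lia.
exists (@cat k U V erefl erefl) => i j.
rewrite (card_hm _ _ UK VK) mxE /U /V.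
case: i => [[|[|[|]]] hi] //; case: j => [[|[|[|]]] hj] //=; lia.
Qed.
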